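(* Any satisfiable $d$-dim linear system $S$ has a solution $x\in\mathbb{Z}^d$ such that $\|x\|_1\leq \mathrm{lcm}(S)\cdot\left(d+\left(2+d+d^{2}\cdot\|S\|\right)^{2d+1}\right)$.
   Context: For a variable $\mathbf{x}$ ranging over $\mathbb{Z}^d$: an equality constraint is $\langle\alpha,\mathbf{x}\rangle=c$ and an inequality constraint is $\langle\alpha,\mathbf{x}\rangle\geq c$, with $\alpha\in\mathbb{Z}^d$, $c\in\mathbb{Z}$; a divisibility constraint is $\langle\alpha,\mathbf{x}\rangle\equiv c \pmod m$ with $m\in\mathbb{N}_+$, $\alpha\in[0,m-1]^d$, $c\in[0,m-1]$. A $d$-dim linear system $S$ is a propositional formula (boolean combination) whose atoms are such constraints for the fixed variable $\mathbf{x}$; its solutions are the $x\in\mathbb{Z}^d$ satisfying it, and $S$ is satisfiable if it has a solution. $\|S\|$ is the least $s\in\mathbb{N}$ with $\max\{\|\alpha\|,|c|\}\leq s$ for all equality and inequality constraints in $S$ (where $\|\alpha\|=\max_i|\alpha(i)|$), and $\mathrm{lcm}(S)$ is the least common multiple of all moduli $m$ of divisibility constraints in $S$ (equal to $1$ if there are none). $\|x\|_1=\sum_i|x(i)|$. *)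

(* Defs.v *)
From mathcomp Require Import all_boot all_order all_algebra.
Set Implicit Arguments. Unset Strict Implicit. Unset Printing Implicit Defensive.
Import Order.TTheory GRing.Theory Num.Theory.
Local Open Scope ring_scope.

Inductive constr (d : nat) : Type :=
| CEq  of ('I_d -> int) & int
| CGe  of ('I_d -> int) & int
| CDvd of nat & ('I_d -> nat) & nat.       (* <alpha, x> = c (mod m) *)

Inductive lsys (d : nat) : Type :=
| LTrue | LFalse
| LAtom of constr d
| LNot of lsys d
| LAnd of lsys d & lsys d
| LOr of lsys d & lsys d.

Definition dotp d (a x : 'I_d -> int) : int := \sum_(i < d) a i * x i.

Definition constr_wf d (k : constr d) : bool :=
  match k with
  | CDvd m a c => [&& (0 < m)%N, [forall i, (a i < m)%N] & (c < m)%N]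
  | _ => true
  end.

Fixpoint lsys_wf d (S : lsys d) : bool :=
  match S with
  | LTrue | LFalse => true
  | LAtom k => constr_wf k
  | LNot S1 => lsys_wf S1
  | LAnd S1 S2 | LOr S1 S2 => lsys_wf S1 && lsys_wf S2
  end.

Definition constr_sat d (k : constr d) (x : 'I_d -> int) : bool :=
  match k with
  | CEq a c => dotp a x == c
  | CGe a c => dotp a x >= c
  | CDvd m a c => (dotp (fun i => (a i)%:Z) x == c%:Z %[mod m%:Z])%Z
  end.

Fixpoint lsys_sat d (S : lsys d) (x : 'I_d -> int) : bool :=
  match S with
  | LTrue => true
  | LFalse => false
  | LAtom k => constr_sat k x
  | LNot S1 => ~~ lsys_sat S1 x
  | LAnd S1 S2 => lsys_sat S1 x && lsys_sat S2 x
  | LOr S1 S2 => lsys_sat S1 x || lsys_sat S2 x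
  end.

Definition vnorm d (a : 'I_d -> int) : nat := \max_(i < d) `|a i|%N.

Definition constr_norm d (k : constr d) : nat :=
  match k with
  | CEq a c | CGe a c => maxn (vnorm a) `|c|%N
  | CDvd _ _ _ => 0%N
  end.

Fixpoint lsys_norm d (S : lsys d) : nat :=
  match S with
  | LTrue | LFalse => 0%N
  | LAtom k => constr_norm k
  | LNot S1 => lsys_norm S1
  | LAnd S1 S2 | LOr S1 S2 => maxn (lsys_norm S1) (lsys_norm S2)
  end.

Definition constr_lcm d (k : constr d) : nat :=
  match k with
  | CDvd m _ _ => m
  | _ => 1%N
  end.

Fixpoint lsys_lcm d (S : lsys d) : nat :=
  match S with
  | LTrue | LFalse => 1%N
  | LAtom k => constr_lcm k
  | LNot S1 => lsys_lcm S1
  | LAnd S1 S2 | LOr S1 S2 => lcmn (lsys_lcm S1) (lsys_lcm S2)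
  end.

Definition norm1 d (x : 'I_d -> int) : nat := \sum_(i < d) `|x i|%N.

(* Main.v *)
Require Import Defs.
From mathcomp Require Import all_boot all_order all_algebra.
From mathcomp Require Import all_fingroup.
From mathcomp Require Import zify ring lra.
Require Import Defs.
Set Implicit Arguments. Unset Strict Implicit. Unset Printing Implicit Defensive.
Import Order.TTheory GRing.Theory Num.Theory.
Local Open Scope ring_scope.

Lemma det_bound k (A : 'M[int]_k) (m : int) : 0 <= m ->
  (forall i j, `|A i j| <= m) -> `|\det A| <= (k`!)%:R * m ^+ k.
Proof.
move=> m0 hA.
rewrite /determinant; apply: le_trans (ler_norm_sum _ _ _) _.
have H : forall s : 'S_k, `|(-1) ^+ s * \prod_i A i (s i)| <= m ^+ k.
  move=> s; rewrite normrM normrX normrN1 expr1n mul1r normr_prod.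
  rewrite -[k in m ^+ k]card_ord -prodr_const.
  by apply: ler_prod => i _; rewrite normr_ge0 hA.
apply: le_trans (ler_sum _ (fun s _ => H s)) _.
by rewrite sumr_const card_Sn mulr_natl.
Qed.

Lemma sum_inj_le k N (f : 'I_k -> 'I_N) (F : 'I_N -> int) :
  injective f -> (forall i, 0 <= F i) -> \sum_(j < k) F (f j) <= \sum_(i < N) F i.
Proof.
move=> finj F0.
have -> : \sum_(j < k) F (f j) = \sum_(j in [set: 'I_k]) F (f j).
  by apply: eq_bigl => j; rewrite inE.
rewrite -(big_imset _ (h := f) (A := [set: 'I_k])); last by move=> a b _ _; apply: finj.
rewrite [X in _ <= X](bigID (mem [set f x | x in [set: 'I_k]])) /= lerDl.
by apply: sumr_ge0.
Qed.

Section Poly.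
Variable n : nat.
Definition cstr := ('rV[int]_n * int)%type.
Definition dq (a : 'rV[int]_n) (y : 'rV[rat]_n) : rat := \sum_i (a 0 i)%:~R * y 0 i.
Definition feas (cs : seq cstr) y := all (fun c : cstr => c.2%:~R <= dq c.1 y) cs.
Definition tightl (cs : seq cstr) y := [seq c <- cs | dq c.1 y == c.2%:~R].
Definition c0 : cstr := (0, 0).
Definition Tm (l : seq cstr) : 'M[rat]_(size l, n) :=
  \matrix_(i, j) ((nth c0 l i).1 0 j)%:~R.
Definition rk cs y := \rank (Tm (tightl cs y)).

Lemma dqD a y z : dq a (y + z) = dq a y + dq a z.
Proof. by rewrite /dq -big_split /=; apply: eq_bigr => i _; rewrite mxE mulrDr. Qed.
Lemma dqZ a t y : dq a (t *: y) = t * dq a y.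
Proof. rewrite /dq mulr_sumr; apply: eq_bigr => i _; rewrite mxE; ring. Qed.
Lemma dqN a y : dq a (- y) = - dq a y.
Proof. by rewrite -scaleN1r dqZ mulN1r. Qed.
Lemma dqB a y z : dq a (y - z) = dq a y - dq a z.
Proof. by rewrite dqD dqN. Qed.
Lemma dq0 a : dq a 0 = 0.
Proof. by rewrite /dq big1 // => i _; rewrite mxE mulr0. Qed.
Lemma dq_sum a I (r : seq I) (F : I -> 'rV[rat]_n) :
  dq a (\sum_(k <- r) F k) = \sum_(k <- r) dq a (F k).
Proof.
elim: r => [|x r IH]; first by rewrite !big_nil dq0.
by rewrite !big_cons dqD IH.
Qed.
Lemma dqNa a y : dq (- a) y = - dq a y.
Proof. rewrite /dq -sumrN; apply: eq_bigr => i _; rewrite mxE intrN; ring. Qed.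

Lemma Tm_mul l (w : 'rV[rat]_n) i : (Tm l *m w^T) i 0 = dq (nth c0 l i).1 w.
Proof. by rewrite !mxE; apply: eq_bigr => j _; rewrite !mxE. Qed.

Lemma rank_incr (l l' : seq cstr) w :
  {subset l <= l'} -> (forall c, c \in l -> dq c.1 w = 0) ->
  (exists2 c, c \in l' & dq c.1 w != 0) -> (\rank (Tm l) < \rank (Tm l'))%N.
Proof.
move=> sub h0 [c cl' cw].
apply: rank_ltmx; rewrite ltmxE; apply/andP; split.
  apply/row_subP => i.
  have ili : nth c0 l i \in l' by apply: sub; apply: mem_nth.
  have jlt : (index (nth c0 l i) l' < size l')%N by rewrite index_mem.
  have -> : row i (Tm l) = row (Ordinal jlt) (Tm l').
    by apply/matrixP => a b; rewrite !mxE /= nth_index.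
  exact: row_sub.
apply/negP => S.
have jlt : (index c l' < size l')%N by rewrite index_mem.
have := submx_trans (row_sub (Ordinal jlt) (Tm l')) S.
case/submxP => D eD.
have Z : Tm l *m w^T = 0.
  apply/matrixP => a b; rewrite ord1 Tm_mul mxE; apply: h0; exact: mem_nth.
have : (row (Ordinal jlt) (Tm l') *m w^T) 0 0 = 0.
  by rewrite eD -mulmxA Z mulmx0 mxE.
rewrite -row_mul mxE Tm_mul /= nth_index //.
by move/eqP: cw.
Qed.

Lemma seq_argmin (T : eqType) (s : seq T) (f : T -> rat) :
  s != [::] -> exists2 x, x \in s & forall y, y \in s -> f x <= f y.
Proof.
elim: s => // a s IH _.
case: (eqVneq s [::]) => [->|ne].
  by exists a; rewrite ?mem_head // => y; rewrite inE => /eqP ->.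
case: (IH ne) => b bs hb.
case: (lerP (f a) (f b)) => hab.
  exists a; first exact: mem_head.
  move=> y; rewrite inE => /orP [/eqP ->//|ys]; exact: le_trans hab (hb _ ys).
exists b; first by rewrite inE bs orbT.
move=> y; rewrite inE => /orP [/eqP ->|ys]; [exact: ltW | exact: hb].
Qed.

Lemma walk cs y w : feas cs y -> (forall c, c \in tightl cs y -> dq c.1 w = 0) ->
  (exists2 c, c \in cs & dq c.1 w < 0) ->
  exists t : rat, 0 < t /\ feas cs (y + t *: w) /\ (rk cs y < rk cs (y + t *: w))%N.
Proof.
move=> hf ht [c1 c1cs c1w].
set N := [seq c <- cs | dq c.1 w < 0].
have Nne : N != [::].
  apply/eqP => e; have : c1 \in N by rewrite mem_filter c1w c1cs.
  by rewrite e.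
pose ratio (c : cstr) := (dq c.1 y - c.2%:~R) / (- dq c.1 w).
have [cs0 cs0N hmin] := seq_argmin ratio Nne.
move: cs0N; rewrite mem_filter => /andP [cw ccs].
have cfe : c1.2%:~R <= dq c1.1 y by move/allP: hf => /(_ _ c1cs).
have slack c : c \in cs -> dq c.1 w < 0 -> c.2%:~R < dq c.1 y.
  move=> hc hw; move/allP: hf => /(_ _ hc) hle.
  rewrite lt_neqAle hle andbT; apply/negP => /eqP e.
  have : c \in tightl cs y by rewrite mem_filter hc e eqxx.
  by move/ht => e0; rewrite e0 ltxx in hw.
exists (ratio cs0); split.
  rewrite /ratio; apply: divr_gt0; first by rewrite subr_gt0; apply: slack.
  by rewrite oppr_gt0.
split.
  apply/allP => c hc; rewrite dqD dqZ.
  move/allP: hf => /(_ _ hc) hle.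
  case: (lerP 0 (dq c.1 w)) => hw.
    have : 0 <= ratio cs0 * dq c.1 w.
      apply: mulr_ge0 => //; rewrite /ratio; apply: divr_ge0.
        by rewrite subr_ge0; apply: ltW; apply: slack.
      by rewrite oppr_ge0 ltW.
    lra.
  have : c \in N by rewrite mem_filter hw hc.
  move/hmin; rewrite {2}/ratio => hr.
  have : ratio cs0 * (- dq c.1 w) <= (dq c.1 y - (c.2)%:~R).
    rewrite -ler_pdivlMr ?oppr_gt0 //.
  lra.
apply: (@rank_incr _ _ w).
- move=> c; rewrite !mem_filter => /andP [/eqP e hc]; rewrite hc andbT.
  rewrite dqD dqZ -e.
  by rewrite (ht c) ?mulr0 ?addr0 // mem_filter e eqxx hc.
- by move=> c /ht.
exists cs0; last by rewrite lt_eqF.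
rewrite mem_filter ccs andbT dqD dqZ /ratio.
have hne : dq cs0.1 w != 0 by rewrite lt_eqF.
apply/eqP; field; exact: hne.
Qed.

Definition fullcol (cs : seq cstr) :=
  forall w : 'rV[rat]_n, w != 0 -> exists2 c, c \in cs & dq c.1 w != 0.

Lemma rk_le cs y : (rk cs y <= n)%N.
Proof. exact: rank_leq_col. Qed.

Lemma ker_vec (l : seq cstr) : (\rank (Tm l) < n)%N ->
  exists2 w : 'rV[rat]_n, w != 0 & forall c, c \in l -> dq c.1 w = 0.
Proof.
move=> hr.
set A := (Tm l)^T.
have hK : (0 < \rank (kermx A))%N by rewrite mxrank_ker mxrank_tr subn_gt0.
have : kermx A != 0 by apply/eqP => e; rewrite e mxrank0 in hK.
move/matrix0Pn => [i [j hij]].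
exists (row i (kermx A)).
  apply/eqP => /matrixP /(_ 0 j) e; move: hij.
  have -> : kermx A i j = row i (kermx A) 0 j by rewrite [RHS]mxE.
  by rewrite e [X in X != _]mxE eqxx.
move=> c hc.
have jlt : (index c l < size l)%N by rewrite index_mem.
have : (row i (kermx A) *m A) = 0 by rewrite -row_mul mulmx_ker row0.
move/matrixP => /(_ 0 (Ordinal jlt)); rewrite !mxE => <-.
by apply: eq_bigr => k _; rewrite !mxE nth_index // mulrC.
Qed.

Lemma vertex cs y : fullcol cs -> feas cs y ->
  exists y', feas cs y' /\ rk cs y' = n.
Proof.
move=> hfc.
suff H : forall k y, (n - rk cs y < k)%N -> feas cs y -> exists y', feas cs y' /\ rk cs y' = n.
  by apply: H; apply: ltnSn.
elim=> [|k IH] {}y //= hk hf.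
have := rk_le cs y; rewrite leq_eqVlt => /orP [/eqP e|hlt]; first by exists y.
have [w wne hw] := ker_vec hlt.
have [c hc cw] := hfc w wne.
have [w' [hw' hc']] : exists w', (forall c, c \in tightl cs y -> dq c.1 w' = 0) /\
    exists2 c, c \in cs & dq c.1 w' < 0.
  case: (ltrP (dq c.1 w) 0) => h.
    by exists w; split => //; exists c.
  exists (- w); split.
    by move=> c' /hw; rewrite dqN => ->; rewrite oppr0.
  by exists c => //; rewrite dqN oppr_lt0 lt_neqAle eq_sym cw.
have [t [t0 [hf' hr']]] := walk hf hw' hc'.
apply: (IH (y + t *: w')) => //.
have := rk_le cs (y + t *: w'); lia.
Qed.

Lemma cramer (l : seq cstr) y (m : int) : 0 <= m -> \rank (Tm l) = n ->
  (forall c, c \in l -> dq c.1 y = c.2%:~R) ->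
  (forall c, c \in l -> forall i, `|c.1 0 i| <= m) ->
  exists D : int, exists g : 'rV[int]_n, 0 < D /\
    (forall i, y 0 i * D%:~R = (g 0 i)%:~R) /\
    forall i, `|g 0 i| <= (n.-1)`!%:R * m ^+ n.-1 * \sum_(c <- l) `|c.2|.
Proof.
move=> m0 hr hy hb.
move: (maxrankfun (Tm l)) (@maxrankfun_inj _ _ _ (Tm l)) (maxrowsub_free (Tm l)).
rewrite hr => f finj hfree.
pose B0 : 'M[int]_n := \matrix_(i, j) (nth c0 l (f i)).1 0 j.
pose cB : 'cV[int]_n := \col_i (nth c0 l (f i)).2.
have eB : rowsub f (Tm l) = map_mx intr B0 by apply/matrixP => i j; rewrite !mxE.
have hu : rowsub f (Tm l) \in unitmx by rewrite -row_free_unit.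
rewrite eB in hu.
have hdet : \det B0 != 0.
  by move: hu; rewrite unitmxE unitfE det_map_mx intr_eq0.
have eq1 : map_mx intr B0 *m y^T = map_mx intr cB.
  apply/matrixP => i j; rewrite ord1 !mxE.
  have hi : nth c0 l (f i) \in l by apply: mem_nth.
  rewrite -(hy _ hi) /dq; apply: eq_bigr => k _; rewrite !mxE //.
have eq2 : (\det B0)%:~R *: y^T = map_mx intr (\adj B0 *m cB).
  rewrite map_mxM map_mx_adj -eq1 mulmxA mul_adj_mx mul_scalar_mx.
  by rewrite det_map_mx.
pose G := \adj B0 *m cB.
exists `|\det B0|, (Num.sg (\det B0) *: G)^T.
split; first by rewrite normr_gt0.
split.
  move=> i.
  have e3 : (\det B0)%:~R * y 0 i = (G i 0)%:~R.
    transitivity (((\det B0)%:~R *: y^T) i 0); first by rewrite !mxE.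
    by rewrite eq2 mxE.
  have -> : ((Num.sg (\det B0) *: G)^T) 0 i = Num.sg (\det B0) * G i 0 by rewrite !mxE.
  by rewrite normrEsg !intrM -e3; ring.
have K : forall i j, `|\adj B0 i j| <= (n.-1)`!%:R * m ^+ n.-1.
  move=> i j; rewrite mxE /cofactor normrM normrX normrN1 expr1n mul1r.
  apply: det_bound => // a b; rewrite !mxE.
  apply: hb; exact: mem_nth.
move=> i; rewrite !mxE normrM.
have hsg : `|Num.sg (\det B0)| = 1 by rewrite normr_sg hdet.
rewrite hsg mul1r.
apply: le_trans (ler_norm_sum _ _ _) _.
apply: (@le_trans _ _ (\sum_j (n.-1)`!%:R * m ^+ n.-1 * `|cB j 0|)).
  apply: ler_sum => j _; rewrite normrM ler_wpM2r //.
rewrite -mulr_sumr ler_wpM2l //; first by apply: mulr_ge0 => //; apply: exprn_ge0.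
rewrite (big_nth c0) big_mkord.
have := sum_inj_le (F := fun k : 'I_(size l) => `|(nth c0 l k).2|) finj.
move=> H; apply: le_trans (H _); last by move=> ?; apply: normr_ge0.
by rewrite le_eqVlt; apply/orP; left; apply/eqP/eq_bigr => j _; rewrite mxE.
Qed.

Lemma arith1 (N a b k : nat) : (N - a < k.+1)%N -> (a < b)%N -> (b <= N)%N -> (N - b < k)%N.
Proof. lia. Qed.
Lemma arith2 (N a b K : nat) : (a < b)%N -> (b <= N)%N -> (K <= N - b)%N -> (K.+1 <= N - a)%N.
Proof. lia. Qed.

Lemma sum_filter_le (T : Type) (s : seq T) (P : pred T) (F : T -> int) :
  (forall x, 0 <= F x) -> \sum_(x <- [seq x <- s | P x]) F x <= \sum_(x <- s) F x.
Proof.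
move=> F0; rewrite big_filter big_mkcond /=.
by apply: ler_sum => x _; case: (P x) => //.
Qed.

Definition gprop cs (m : int) (mu : rat) (g : 'rV[int]_n) :=
  [/\ 0 <= mu, feas cs (map_mx intr g), g != 0 &
     forall i, `|g 0 i| <= (n.-1)`!%:R * m ^+ n.-1].

Lemma decomp cs (m : int) : 1 <= m -> fullcol cs -> (forall c, c \in cs -> c.2 = 0) ->
  (forall c, c \in cs -> forall i, `|c.1 0 i| <= m) ->
  forall v, feas cs v -> exists K (mu : nat -> rat) (g : nat -> 'rV[int]_n),
   [/\ (K <= n)%N, (forall k, (k < K)%N -> gprop cs m (mu k) (g k)) &
       v = \sum_(k < K) mu k *: map_mx intr (g k)].
Proof.
move=> m1 hfc hz hb.
suff H : forall k v, (n - rk cs v < k)%N -> feas cs v ->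
  exists K (mu : nat -> rat) (g : nat -> 'rV[int]_n),
   [/\ (K <= n - rk cs v)%N, (forall k, (k < K)%N -> gprop cs m (mu k) (g k)) &
       v = \sum_(k < K) mu k *: map_mx intr (g k)].
  move=> v hv; have [K [mu [g [h1 h2 h3]]]] := H _ v (ltnSn _) hv.
  by exists K, mu, g; split => //; apply: leq_trans h1 (leq_subr _ _).
elim=> [|k IH] v // hk hv.
case: (eqVneq v 0) => [->|vne].
  exists 0%N, (fun _ => 0), (fun _ => 0); split => //.
  by rewrite big_ord0.
have [c1 c1cs c1v] := hfc v vne.
have c1pos : 0 < dq c1.1 v.
  move/allP: hv => /(_ _ c1cs); rewrite hz // => h.
  by rewrite lt_neqAle eq_sym c1v.
set al := dq c1.1 v.
pose cs2 := cs ++ [seq ((- c.1), 0) | c <- tightl cs v] ++ [:: (c1.1, 1)].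
have hfc2 : fullcol cs2.
  move=> w wne; have [c hc hcw] := hfc w wne; exists c => //.
  by rewrite mem_cat hc.
have feas2 : feas cs2 (al^-1 *: v).
  rewrite /feas !all_cat; apply/and3P; split.
  - apply/allP => c hc; rewrite dqZ hz //; apply: mulr_ge0.
      by rewrite invr_ge0 ltW.
    by move/allP: hv => /(_ _ hc); rewrite hz.
  - apply/allP => c' /mapP [c hc ->] /=; rewrite dqZ dqNa.
    move: hc; rewrite mem_filter => /andP [/eqP -> hc].
    by rewrite hz // oppr0 mulr0.
  - by rewrite /= andbT dqZ mulVf // lt_eqF.
have [y [hy hry]] := vertex hfc2 feas2.
have bnd2 : forall c, c \in tightl cs2 y -> forall i, `|c.1 0 i| <= m.
  move=> c; rewrite mem_filter => /andP [_]; rewrite !mem_cat => /or3P [hc|hc|hc].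
  - exact: hb.
  - case/mapP: hc => c' hc' -> i /=; rewrite mxE normrN; apply: hb.
    by move: hc'; rewrite mem_filter => /andP [].
  - by move: hc; rewrite inE => /eqP -> /=; apply: hb.
have teq : forall c, c \in tightl cs2 y -> dq c.1 y = c.2%:~R.
  by move=> c; rewrite mem_filter => /andP [/eqP].
have m0 : 0 <= m by apply: le_trans m1.
have [D [g [D0 [hDg hgb]]]] := cramer m0 hry teq bnd2.
have sum1 : \sum_(c <- tightl cs2 y) `|c.2| <= 1.
  apply: le_trans (sum_filter_le _ _ (fun c : cstr => normr_ge0 c.2)) _.
  rewrite !big_cat /= big_cons big_nil /= normr1 addr0.
  rewrite big1_seq; last by move=> c /andP [_ hc]; rewrite hz // normr0.
  rewrite big_map big1_seq ?add0r // => c _; rewrite normr0 //.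
have hgb' : forall i, `|g 0 i| <= (n.-1)`!%:R * m ^+ n.-1.
  move=> i; apply: le_trans (hgb i) _.
  rewrite -[X in _ <= X]mulr1 ler_wpM2l //.
  by apply: mulr_ge0; [apply: ler0n | apply: exprn_ge0].
pose gv := map_mx (intr : int -> rat) g.
have egv : gv = D%:~R *: y by apply/matrixP => a b; rewrite ord1 !mxE -hDg mulrC.
have ycs : forall c, c \in cs -> 0 <= dq c.1 y.
  move=> c hc; move/allP: hy => /(_ c); rewrite mem_cat hc hz // => /(_ isT) //.
have Dpos : (0 : rat) < D%:~R by rewrite ltr0z.
have gfeas : feas cs gv.
  apply/allP => c hc; rewrite egv dqZ hz //; apply: mulr_ge0; [exact: ltW | exact: ycs].
have gtight : forall c, c \in tightl cs v -> dq c.1 gv = 0.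
  move=> c hc; rewrite egv dqZ.
  have hc' : c \in cs by move: hc; rewrite mem_filter => /andP [].
  have : ((- c.1), 0) \in cs2 by rewrite !mem_cat; apply/or3P; constructor 2; apply/mapP; exists c.
  move/allP: hy => h /h /=; rewrite dqNa oppr_ge0 => h1.
  have h2 := ycs _ hc'.
  have -> : dq c.1 y = 0 by apply/eqP; rewrite eq_le h1 h2.
  by rewrite mulr0.
have gc1 : 0 < dq c1.1 gv.
  rewrite egv dqZ; apply: mulr_gt0 => //.
  have : (c1.1, 1) \in cs2 by rewrite !mem_cat inE eqxx !orbT.
  by move/allP: hy => h /h /= hh; apply: lt_le_trans hh.
have gne : g != 0.
  apply/eqP => g0; move: gc1; rewrite /gv g0 map_mx0 dq0 ltxx //.
have w1 : forall c, c \in tightl cs v -> dq c.1 (- gv) = 0.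
  by move=> c hc; rewrite dqN gtight // oppr0.
have w2 : exists2 c, c \in cs & dq c.1 (- gv) < 0.
  by exists c1 => //; rewrite dqN oppr_lt0.
have [t [t0 [hf' hr']]] := walk hv w1 w2.
have hk' := arith1 hk hr' (rk_le _ _).
have [K [mu [g' [hK hg' hsum]]]] := IH _ hk' hf'.
exists K.+1, (fun k => if k is k'.+1 then mu k' else t),
  (fun k => if k is k'.+1 then g' k' else g).
split.
- exact: arith2 hr' (rk_le _ _) hK.
- case=> [_|k' hk'']; last exact: hg'.
  by split => //; apply: ltW.
rewrite big_ord_recl /= -hsum.
by rewrite /gv scalerN addrC subrK.
Qed.
End Poly.


Section ILP.
Variable d : nat.
Local Notation n := d.+1.

Definition rowP (a : 'I_d -> int) (b : int) : 'rV[int]_n :=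
  \row_(i < n) (if unlift ord_max i is Some j then a j else - b).
Definition orow (s : 'I_d -> int) (j : 'I_d) : 'rV[int]_n :=
  \row_(i < n) (if unlift ord_max i is Some j' then (if j' == j then s j else 0) else 0).
Definition trow : 'rV[int]_n := \row_(i < n) (if unlift ord_max i is Some _ then 0 else 1).
Definition vrow (x : 'I_d -> int) (t : rat) : 'rV[rat]_n :=
  \row_(i < n) (if unlift ord_max i is Some j then (x j)%:~R else t).

Lemma lift_widen (i : 'I_d) : lift ord_max i = widen_ord (leqnSn d) i.
Proof. by apply: val_inj; rewrite /= /bump leqNgt ltn_ord. Qed.

Lemma dq_split (a : 'rV[int]_n) (y : 'rV[rat]_n) :
  dq a y = \sum_(j < d) (a 0 (lift ord_max j))%:~R * y 0 (lift ord_max j)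
           + (a 0 ord_max)%:~R * y 0 ord_max.
Proof.
rewrite /dq big_ord_recr /=; congr (_ + _).
by apply: eq_bigr => j _; rewrite lift_widen.
Qed.

Lemma dq_rowP a b y : dq (rowP a b) y =
  \sum_(j < d) (a j)%:~R * y 0 (lift ord_max j) - b%:~R * y 0 ord_max.
Proof.
rewrite dq_split !mxE unlift_none intrN mulNr; congr (_ - _).
by apply: eq_bigr => j _; rewrite !mxE liftK.
Qed.

Lemma dq_orow s j y : dq (orow s j) y = (s j)%:~R * y 0 (lift ord_max j).
Proof.
rewrite dq_split !mxE unlift_none mul0r addr0 (bigD1 j) //= big1 ?addr0.
  by rewrite !mxE liftK eqxx.
by move=> k hk; rewrite !mxE liftK (negbTE hk) mul0r.
Qed.

Lemma dq_trow y : dq trow y = y 0 ord_max.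
Proof.
rewrite dq_split !mxE unlift_none mul1r big1 ?add0r //.
by move=> k _; rewrite !mxE liftK mul0r.
Qed.

Lemma vrowE x t j : vrow x t 0 (lift ord_max j) = (x j)%:~R.
Proof. by rewrite mxE liftK. Qed.
Lemma vrowM x t : vrow x t 0 ord_max = t.
Proof. by rewrite mxE unlift_none. Qed.

Lemma dotpE (a x : 'I_d -> int) : (dotp a x)%:~R = \sum_j (a j)%:~R * (x j)%:~R :> rat.
Proof. rewrite /dotp rmorph_sum; apply: eq_bigr => j _; exact: intrM. Qed.

Lemma dq_rowP_v a b x : dq (rowP a b) (vrow x 1) = (dotp a x - b)%:~R.
Proof.
rewrite dq_rowP vrowM mulr1 intrB dotpE; congr (_ - _).
by apply: eq_bigr => j _; rewrite vrowE.
Qed.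


Lemma norm1Z (y : 'I_d -> int) : (norm1 y)%:Z = \sum_j `|y j|.
Proof.
rewrite /norm1 (big_morph Posz PoszD (erefl _)).
by apply: eq_bigr => j _; rewrite abszE.
Qed.

Lemma ilp (N : nat) (A : nat -> 'I_d -> int) (B : nat -> int) (m : int) (x0 : 'I_d -> int) :
  1 <= m -> (forall j, (j < N)%N -> (forall i, `|A j i| <= m) /\ `|B j| <= m) ->
  (forall j, (j < N)%N -> B j <= dotp (A j) x0) ->
  exists x, (forall j, (j < N)%N -> B j <= dotp (A j) x) /\
   ((norm1 x)%:Z <= d%:Z * (d.+1)%:Z * (d`!)%:Z * m ^+ d).
Proof.
move=> m1 hb hx0.
pose s : 'I_d -> int := fun i => if 0 <= x0 i then 1 else -1.
have s_norm : forall i, `|s i| = 1.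
  by move=> i; rewrite /s; case: ifP => _; rewrite ?normrN normr1.
have s_ne0 : forall i, s i != 0.
  by move=> i; rewrite -normr_eq0 s_norm.
have s_abs : forall i z, 0 <= s i * z -> `|z| = s i * z.
  move=> i z; rewrite /s; case: ifP => _; rewrite ?mul1r ?mulN1r.
    by move=> h; rewrite ger0_norm.
  by move=> h; rewrite ler0_norm // -oppr_ge0.
have m0 : 0 <= m by apply: le_trans m1.
pose cs : seq (cstr d.+1) := [seq (rowP (A j) (B j), 0) | j <- iota 0 N] ++
   [seq (orow s j, 0) | j <- enum 'I_d] ++ [:: (trow, 0)].
have memR : forall j, (j < N)%N -> (rowP (A j) (B j), 0) \in cs.
  move=> j hj; rewrite mem_cat; apply/orP; left; apply/mapP; exists j => //.
  by rewrite mem_iota add0n hj.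
have memO : forall j, (orow s j, 0) \in cs.
  move=> j; rewrite !mem_cat; apply/or3P; constructor 2; apply/mapP; exists j => //.
  by rewrite mem_enum.
have memT : (trow, 0) \in cs by rewrite !mem_cat inE eqxx !orbT.
have hz : forall c, c \in cs -> c.2 = 0.
  move=> c; rewrite !mem_cat => /or3P [/mapP [j _ ->]|/mapP [j _ ->]|] //.
  by rewrite inE => /eqP ->.
have hbm : forall c, c \in cs -> forall i, `|c.1 0 i| <= m.
  move=> c; rewrite !mem_cat => /or3P [/mapP [j hj ->]|/mapP [j _ ->]|] /=.
  - move: hj; rewrite mem_iota add0n => /= hj i.
    have [hA hB] := hb j hj.
    by rewrite mxE; case: (unlift ord_max i) => [k|]; rewrite ?normrN.
  - move=> i; rewrite mxE; case: (unlift ord_max i) => [k|]; last by rewrite normr0.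
    by case: ifP => _; rewrite ?s_norm ?normr0.
  - rewrite inE => /eqP -> i /=; rewrite mxE.
    by case: (unlift ord_max i) => [k|]; rewrite ?normr0 ?normr1.
have hfc : fullcol cs.
  move=> w /matrix0Pn [i [i' hw]]; rewrite ord1 in hw.
  case: (unliftP ord_max i') hw => [j ->|->] hw.
    exists (orow s j, 0) => //; rewrite dq_orow mulf_neq0 //.
    by rewrite intr_eq0.
  by exists (trow, 0) => //; rewrite dq_trow.
pose sol x := forall j, (j < N)%N -> B j <= dotp (A j) x.
pose bnd := d%:Z * (d.+1)%:Z * (d`!)%:Z * m ^+ d.
have Step : forall x, sol x -> (forall i, 0 <= s i * x i) ->
   (exists2 x', sol x' /\ (forall i, 0 <= s i * x' i) & (norm1 x' < norm1 x)%N)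
   \/ (norm1 x)%:Z <= bnd.
  move=> x hs ho.
  have vf : feas cs (vrow x 1).
    apply/allP => c; rewrite !mem_cat => /or3P [/mapP [j hj ->]|/mapP [j _ ->]|] /=.
    - rewrite dq_rowP_v ler_int subr_ge0; apply: hs.
      by move: hj; rewrite mem_iota add0n.
    - by rewrite dq_orow vrowE -intrM ler_int.
    - by rewrite inE => /eqP -> /=; rewrite dq_trow vrowM.
  have [K [mu [g [hK hg hsum]]]] := decomp m1 hfc hz hbm vf.
  have ex : forall i, vrow x 1 0 i = \sum_(k < K) mu k * (g k 0 i)%:~R.
    by move=> i; rewrite {1}hsum summxE; apply: eq_bigr => k _; rewrite !mxE.
  have gfe : forall k : 'I_K, forall c, c \in cs -> 0 <= dq c.1 (map_mx intr (g k)).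
    move=> k c hc; have [_ hf _ _] := hg k (ltn_ord k).
    by move/allP: hf => /(_ c hc); rewrite hz.
  have mu0 : forall k : 'I_K, 0 <= mu k by move=> k; have [] := hg k (ltn_ord k).
  have sg0 : forall (k : 'I_K) j, 0 <= s j * g k 0 (lift ord_max j).
    move=> k j; have := gfe k _ (memO j); rewrite dq_orow mxE -intrM ler0z //.
  have tau0 : forall k : 'I_K, 0 <= g k 0 ord_max.
    by move=> k; have := gfe k _ memT; rewrite dq_trow mxE ler0z.
  case: (boolP [exists k : 'I_K, (g k 0 ord_max == 0) && (1 < mu k)]).
    case/existsP => k /andP [/eqP gk0 muk]; left.
    pose u j := g k 0 (lift ord_max j).
    pose x' := fun j => x j - u j.
    have ev : vrow x' 1 = vrow x 1 - map_mx intr (g k).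
      apply/matrixP => a i; rewrite ord1 !mxE.
      case: (unliftP ord_max i) => [j ->|->]; first by rewrite intrB.
      by rewrite gk0 subr0.
    have cf : forall c, c \in cs -> 0 <= dq c.1 (vrow x' 1).
      move=> c hc; rewrite ev dqB {1}hsum dq_sum (bigD1 k) //= dqZ.
      have h1 := gfe k c hc.
      have h2 : 0 <= \sum_(l < K | l != k) dq c.1 (mu l *: map_mx intr (g l)).
        by apply: sumr_ge0 => l _; rewrite dqZ; apply: mulr_ge0; [apply: mu0 | apply: gfe].
      have h3 : 0 <= (mu k - 1) * dq c.1 (map_mx intr (g k)).
        by apply: mulr_ge0 => //; rewrite subr_ge0 ltW.
      move: h2 h3; set q := dq _ _; set S := \sum_(_ < _ | _) _ => h2 h3.
      have -> : mu k * q + S - q = (mu k - 1) * q + S by ring.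
      exact: addr_ge0.
    exists x'; first split.
    - move=> j hj; have := cf _ (memR j hj).
      by rewrite /= dq_rowP_v ler0z subr_ge0.
    - move=> j; have := cf _ (memO j).
      by rewrite /= dq_orow vrowE -intrM ler0z.
    have nE : forall y, (forall i, 0 <= s i * y i) -> (norm1 y)%:Z = \sum_j s j * y j.
      by move=> y hy; rewrite norm1Z; apply: eq_bigr => j _; apply: s_abs.
    have ho' : forall i, 0 <= s i * x' i.
      move=> j; have := cf _ (memO j).
      by rewrite /= dq_orow vrowE -intrM ler0z.
    rewrite -ltz_nat (nE _ ho) (nE _ ho').
    have -> : \sum_j s j * x' j = \sum_j s j * x j - \sum_j s j * u j.
      by rewrite -sumrB; apply: eq_bigr => j _; rewrite /x' mulrBr.
    rewrite ltrBlDr ltrDl.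
    have gne : g k != 0 by have [] := hg k (ltn_ord k).
    move/matrix0Pn: gne => [i0 [i' hw]]; rewrite ord1 in hw.
    case: (unliftP ord_max i') hw => [j ->|->] hw; last by rewrite gk0 eqxx in hw.
    rewrite (bigD1 j) //=; apply: ltr_pwDl.
      by rewrite lt_neqAle eq_sym mulf_neq0 // sg0.
    by apply: sumr_ge0 => l _; apply: sg0.
  rewrite negb_exists => /forallP H; right.
  have mu1 : forall k : 'I_K, mu k <= 1.
    move=> k; case: (eqVneq (g k 0 ord_max) 0) => [t0|tn0].
      by move: (H k); rewrite t0 eqxx /= -leNgt.
    have t1 : (1 : rat) <= (g k 0 ord_max)%:~R.
      by rewrite ler1z -gtz0_ge1 lt_neqAle eq_sym tn0 tau0.
    have := ex ord_max; rewrite vrowM (bigD1 k) //= => e1.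
    have h2 : 0 <= \sum_(l < K | l != k) mu l * (g l 0 ord_max)%:~R.
      by apply: sumr_ge0 => l _; apply: mulr_ge0 => //; rewrite ler0z.
    have h3 : mu k <= mu k * (g k 0 ord_max)%:~R.
      by rewrite -{1}[mu k]mulr1 ler_wpM2l.
    move: e1 h2 h3; set S := \sum_(_ < _ | _) _; set t := _%:~R; lra.
  pose R : int := (d`!)%:R * m ^+ d.
  have hR : forall (k : 'I_K) i, `|g k 0 i| <= R.
    by move=> k i; have [_ _ _] := hg k (ltn_ord k); apply.
  have xb : forall j, `|x j| <= (d.+1)%:Z * R.
    move=> j; rewrite (s_abs j _ (ho j)) -(ler_int rat) intrM.
    rewrite -(vrowE x 1 j) ex mulr_sumr.
    apply: (@le_trans _ _ (\sum_(k < K) R%:~R)).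
      apply: ler_sum => k _; rewrite mulrCA -intrM.
      apply: le_trans (ler_piMl _ (mu1 k)) _; first by rewrite ler0z sg0.
      rewrite ler_int; apply: le_trans (ler_norm _) _.
      by rewrite normrM s_norm mul1r hR.
    have -> : \sum_(k < K) (R%:~R : rat) = (\sum_(k < K) R)%:~R.
      by rewrite rmorph_sum.
    rewrite ler_int sumr_const card_ord -mulr_natl.
    apply: ler_wpM2r.
      by apply: mulr_ge0; [apply: ler0n | apply: exprn_ge0].
    by rewrite natz lez_nat.
  rewrite norm1Z /bnd.
  apply: (@le_trans _ _ (\sum_(j < d) (d.+1)%:Z * R)); first by apply: ler_sum => j _.
  rewrite sumr_const card_ord /R -mulr_natl !natz.
  by rewrite le_eqVlt; apply/orP; left; apply/eqP; ring.
have Main : forall Nn x, (norm1 x <= Nn)%N -> sol x -> (forall i, 0 <= s i * x i) ->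
   exists x', sol x' /\ (norm1 x')%:Z <= bnd.
  elim=> [|Nn IH] x hN hs ho.
    case: (Step x hs ho) => [[x' _ hlt]|]; first by rewrite leqn0 in hN; rewrite (eqP hN) in hlt.
    by move=> h; exists x.
  case: (Step x hs ho) => [[x' [hs' ho'] hlt]|h]; last by exists x.
  by apply: (IH x') => //; rewrite -ltnS; apply: leq_trans hlt hN.
apply: (Main _ x0 (leqnn _) hx0).
move=> i; rewrite /s; case: ifP => h; rewrite ?mul1r ?mulN1r //.
by rewrite oppr_ge0; apply: ltW; rewrite ltNge h.
Qed.

End ILP.


Section Outer.
Variable d : nat.

Definition negf (a : 'I_d -> int) : 'I_d -> int := fun i => - a i.

Lemma dotpN (a x : 'I_d -> int) : dotp (negf a) x = - dotp a x.
Proof. by rewrite /dotp -sumrN; apply: eq_bigr => i _; rewrite /negf mulNr. Qed.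

Definition lit (x0 : 'I_d -> int) (k : constr d) : seq (('I_d -> int) * int) :=
 match k with
 | CEq a c => if dotp a x0 == c then [:: (a, c); (negf a, - c)]
              else if c < dotp a x0 then [:: (a, c + 1)] else [:: (negf a, - c + 1)]
 | CGe a c => if c <= dotp a x0 then [:: (a, c)] else [:: (negf a, - c + 1)]
 | CDvd _ _ _ => [::]
 end.

Fixpoint consL (x0 : 'I_d -> int) (S : lsys d) : seq (('I_d -> int) * int) :=
  match S with
  | LAtom k => lit x0 k
  | LNot S1 => consL x0 S1
  | LAnd S1 S2 | LOr S1 S2 => consL x0 S1 ++ consL x0 S2
  | _ => [::]
  end.

Definition solc (x : 'I_d -> int) (l : seq (('I_d -> int) * int)) :=
  all (fun p => p.2 <= dotp p.1 x) l.

Lemma cons_x0 x0 S : solc x0 (consL x0 S).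
Proof.
rewrite /solc; elim: S => //=.
- case=> [a c|a c|m a c] /=.
  + case: ifP => [/eqP e|ne] /=; first by rewrite dotpN e lexx lexx.
    case: ifP => h /=; first by rewrite andbT; move: h; clear; lia.
    rewrite andbT dotpN; move/negbT: h; move/negbT: ne; clear; lia.
  + case: ifP => h /=; first by rewrite h.
    by rewrite andbT dotpN; move/negbT: h; clear; lia.
  + by [].
all: try by move=> S1 IH1 S2 IH2; rewrite all_cat IH1 IH2.
Qed.


Lemma sat_eq x0 S (L : nat) : (lsys_lcm S %| L)%N -> forall x,
  (forall i, (L%:Z %| x i - x0 i)%Z) -> solc x (consL x0 S) -> lsys_sat S x = lsys_sat S x0.
Proof.
elim: S => //=.
- case=> [a c|a c|m a c] /= hL x hx; rewrite /solc /=.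
  + case: ifP => [/eqP e|ne] /=.
      rewrite dotpN andbT => /andP [h1 h2].
      by apply/eqP; move: h1 h2; clear; lia.
    case: ifP => h /=; rewrite andbT ?dotpN => h1.
      by apply/eqP; move: h1; clear; lia.
    by apply/eqP; move: h1; clear; lia.
  + case: ifP => h /=; rewrite andbT ?dotpN => h1 //.
    by apply/negbTE; move: h1; clear; lia.
  + move=> _; rewrite !eqz_mod_dvd.
    set a' := fun i => (a i)%:Z.
    have hd : (m%:Z %| dotp a' x - dotp a' x0)%Z.
      rewrite /dotp -sumrB; apply: rpred_sum => i _; rewrite -mulrBr.
      apply: dvdz_mull; apply: dvdz_trans (hx i); by rewrite dvdzE.
    have -> : dotp a' x - c%:Z = (dotp a' x - dotp a' x0) + (dotp a' x0 - c%:Z).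
      by rewrite addrA subrK.
    by rewrite rpredDl.
- by move=> S1 IH hL x hx h; rewrite (IH hL x hx h).
- move=> S1 IH1 S2 IH2 hL x hx; rewrite /solc all_cat => /andP [h1 h2].
  rewrite (IH1 _ x hx h1) ?(IH2 _ x hx h2) //.
    exact: dvdn_trans (dvdn_lcmr _ _) hL.
  exact: dvdn_trans (dvdn_lcml _ _) hL.
- move=> S1 IH1 S2 IH2 hL x hx; rewrite /solc all_cat => /andP [h1 h2].
  rewrite (IH1 _ x hx h1) ?(IH2 _ x hx h2) //.
    exact: dvdn_trans (dvdn_lcmr _ _) hL.
  exact: dvdn_trans (dvdn_lcml _ _) hL.
Qed.

Lemma vnorm_ge (a : 'I_d -> int) i : `|a i| <= (vnorm a)%:Z.
Proof. by rewrite -abszE lez_nat /vnorm (leq_bigmax i). Qed.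

Definition pbnd (s : int) (p : ('I_d -> int) * int) :=
  [forall i, `|p.1 i| <= s] && (`|p.2| <= s + 1).

Lemma cons_bnd x0 S (s : int) : (lsys_norm S)%:Z <= s -> all (pbnd s) (consL x0 S).
Proof.
elim: S => //=.
- case=> [a c|a c|m a c] //= hs.
  + have H1 : forall i, `|a i| <= s.
      move=> i; apply: le_trans (vnorm_ge a i) _; apply: le_trans hs.
      by rewrite lez_nat leq_maxl.
    have H2 : `|c| <= s.
      apply: le_trans hs; rewrite -abszE lez_nat; exact: leq_maxr.
    have H3 : forall i, `|negf a i| <= s by move=> i; rewrite normrN.
    have H4 : `|c + 1| <= s + 1 by apply: le_trans (ler_normD _ _) _; rewrite normr1 lerD2r.
    have H5 : `|- c + 1| <= s + 1 by apply: le_trans (ler_normD _ _) _; rewrite normr1 normrN lerD2r.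
    rewrite /pbnd.
    case: ifP => _ /=.
      have H2' : `|c| <= s + 1 by apply: le_trans H2 _; rewrite lerDl.
      rewrite normrN H2' !andbT; apply/andP; split; apply/forallP => //.
    by case: ifP => _ /=; rewrite ?H4 ?H5 !andbT; apply/forallP.
  + have H1 : forall i, `|a i| <= s.
      move=> i; apply: le_trans (vnorm_ge a i) _; apply: le_trans hs.
      by rewrite lez_nat leq_maxl.
    have H2 : `|c| <= s.
      apply: le_trans hs; rewrite -abszE lez_nat; exact: leq_maxr.
    have H3 : forall i, `|negf a i| <= s by move=> i; rewrite normrN.
    have H5 : `|- c + 1| <= s + 1 by apply: le_trans (ler_normD _ _) _; rewrite normr1 normrN lerD2r.
    rewrite /pbnd.
    have H2' : `|c| <= s + 1 by apply: le_trans H2 _; rewrite lerDl.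
    case: ifP => _ /=; rewrite ?H5 ?H2' !andbT; apply/forallP => //.
- move=> S1 IH1 S2 IH2 hs; rewrite all_cat IH1 ?IH2 //; apply: le_trans hs; rewrite lez_nat.
    exact: leq_maxr.
  exact: leq_maxl.
- move=> S1 IH1 S2 IH2 hs; rewrite all_cat IH1 ?IH2 //; apply: le_trans hs; rewrite lez_nat.
    exact: leq_maxr.
  exact: leq_maxl.
Qed.

Lemma lcm_pos (S : lsys d) : lsys_wf S -> (0 < lsys_lcm S)%N.
Proof.
elim: S => //=.
- by case=> [a c|a c|m a c] //= /and3P [].
- by move=> S1 IH1 S2 IH2 /andP [h1 h2]; rewrite lcmn_gt0 IH1 ?IH2.
- by move=> S1 IH1 S2 IH2 /andP [h1 h2]; rewrite lcmn_gt0 IH1 ?IH2.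
Qed.

End Outer.

Lemma factb k : (k.+1`! <= k.+1 ^ k)%N.
Proof.
elim: k => // k IH.
rewrite factS expnS leq_mul2l /=.
apply: leq_trans IH _.
case: k => // k; rewrite leq_exp2r //.
Qed.

Lemma arithG d s : (d * d.+1 * d`! * (d * s + s + 1) ^ d <= (2 + d + d ^ 2 * s) ^ (2 * d + 1))%N.
Proof.
case: d => [|d]; first by rewrite !mul0n.
case: d => [|d].
  rewrite !mul1n expn1 !expnS expn0 muln1 /=.
  have -> : 1`! = 1%N by []. nia.
set D := d.+2.
set M := (2 + D + D ^ 2 * s)%N.
have h1 : (D * s + s + 1 <= M)%N.
  rewrite /M /D; nia.
have h2 : (D * D.+1 * D`! <= M ^ D.+1)%N.
  rewrite -mulnA -factS.
  apply: (@leq_trans (D * D.+1 ^ D)); first by rewrite leq_mul2l factb orbT.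
  apply: (@leq_trans (D.+2 ^ D.+1)).
    rewrite expnS; apply: leq_mul; first by apply: leq_trans (leqnSn _) (leqnSn _).
    by rewrite leq_exp2r.
  rewrite leq_exp2r // /M; nia.
have -> : (2 * D + 1 = D.+1 + D)%N by lia.
rewrite expnD; apply: leq_mul => //.
by rewrite leq_exp2r.
Qed.

Lemma floor_bnd (f z D S Lz : int) : 0 < Lz -> 0 <= D -> 0 <= S -> f * Lz <= z -> z < (f + 1) * Lz ->
  `|z| <= D * S * (Lz - 1) + S + 1 -> `|f| <= D * S + S + 1.
Proof.
move=> L0 D0 S0 h1 h2; rewrite !ler_norml => /andP [h3 h4]; apply/andP; split.
- have : (- (D * S + S + 1) - 1) * Lz < (f + 1) * Lz - Lz.
    nia.
  nia.
- have : f * Lz <= (D * S + S + 1) * Lz by nia.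
  nia.
Qed.


Unset Implicit Arguments.
Theorem theorem2 (d : nat) (S : lsys d) :
  lsys_wf S ->
  (exists x : 'I_d -> int, lsys_sat S x) ->
  exists x : 'I_d -> int, lsys_sat S x /\
    (norm1 x <= lsys_lcm S * (d + (2 + d + d ^ 2 * lsys_norm S) ^ (2 * d + 1)))%N.
Proof.
move=> wf [x0 hx0].
have L0 : (0 < lsys_lcm S)%N := lcm_pos wf.
move: L0 hx0; set L := lsys_lcm S; set s := lsys_norm S => L0 hx0.
have Lz0 : (0 : int) < L%:Z by rewrite ltz_nat.
pose r i := (x0 i %% L%:Z)%Z.
pose q0 i := (x0 i %/ L%:Z)%Z.
have hr : forall i, 0 <= r i /\ r i < L%:Z.
  move=> i; split; first by apply: modz_ge0; rewrite lt0r_neq0.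
  by have := ltz_mod (x0 i) (lt0r_neq0 Lz0); rewrite gtr0_norm.
have ex0 : forall i, x0 i = q0 i * L%:Z + r i by move=> i; apply: divz_eq.
pose Lc := consL x0 S.
pose p0 : ('I_d -> int) * int := (fun _ => 0, 0).
pose A j := (nth p0 Lc j).1.
pose C j := (nth p0 Lc j).2.
pose B j := - ((dotp (A j) r - C j) %/ L%:Z)%Z.
have dotLq : forall a q, dotp a (fun i => q i * L%:Z + r i) = dotp a q * L%:Z + dotp a r.
  move=> a q; rewrite /dotp mulr_suml -big_split; apply: eq_bigr => i _ /=; ring.
have equiv : forall j q, (B j <= dotp (A j) q) = (C j <= dotp (A j) (fun i => q i * L%:Z + r i)).
  move=> j q; rewrite dotLq /B lerNl lez_divRL //.
  apply/idP/idP => h; nia.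
have dx0 : forall a, dotp a (fun i => q0 i * L%:Z + r i) = dotp a x0.
  by move=> a; apply: eq_bigr => i _; rewrite -ex0.
have hc0 := cons_x0 x0 S.
have sol0 : forall j, (j < size Lc)%N -> B j <= dotp (A j) q0.
  move=> j hj; rewrite equiv dx0.
  by move/(all_nthP p0): hc0 => /(_ j hj).
pose m : int := (d * s + s + 1)%N%:Z.
have m1 : 1 <= m by rewrite /m lez_nat addn1.
have hb0 : all (pbnd s%:Z) Lc := cons_bnd x0 (lexx _).
have sm : s%:Z <= m by rewrite lez_nat; apply: leq_trans (leq_addl (d * s) s) (leq_addr 1 _).
have hbnd : forall j, (j < size Lc)%N -> (forall i, `|A j i| <= m) /\ `|B j| <= m.
  move=> j hj; move/(all_nthP p0): hb0 => /(_ j hj) /andP [/forallP hA hC].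
  split; first by move=> i; apply: le_trans (hA i) sm.
  have hz : `|dotp (A j) r| <= d%:Z * s%:Z * (L%:Z - 1).
    apply: le_trans (ler_norm_sum _ _ _) _.
    apply: (@le_trans _ _ (\sum_(i < d) s%:Z * (L%:Z - 1))).
      apply: ler_sum => i _; rewrite normrM; apply: ler_pM => //; first exact: hA.
      have [h1 h2] := hr i; rewrite ger0_norm //.
      by rewrite -ltzD1 subrK.
    by rewrite sumr_const card_ord -mulr_natl natz mulrA.
  rewrite /B normrN /m !PoszD PoszM.
  apply: floor_bnd (lez_floor _ (lt0r_neq0 Lz0)) (ltz_ceil _ Lz0) _ => //.
  apply: le_trans (ler_normB _ _) _.
  by rewrite -addrA lerD.
have [q [hq hqb]] := ilp m1 hbnd sol0.
pose x i := q i * L%:Z + r i.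
exists x; split.
  have hsc : solc x Lc.
    apply/(all_nthP p0) => j hj.
    by have := hq j hj; rewrite equiv.
  have hdiv : forall i, (L%:Z %| x i - x0 i)%Z.
    move=> i; rewrite /x ex0.
    have -> : q i * L%:Z + r i - (q0 i * L%:Z + r i) = (q i - q0 i) * L%:Z by ring.
    by apply: dvdz_mull; apply: dvdzz.
  by rewrite (sat_eq (dvdnn L) hdiv hsc).
have pX : forall k e, Posz (k ^ e)%N = (Posz k) ^+ e.
  by move=> k e; rewrite -!natz natrX.
have hqn : (norm1 q <= d * d.+1 * d`! * (d * s + s + 1) ^ d)%N.
  by rewrite -lez_nat; apply: le_trans hqb _; rewrite !PoszM pX.
have hx : forall i, (`|x i|%N <= `|q i|%N * L + L)%N.
  move=> i; rewrite -lez_nat PoszD PoszM !abszE /x.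
  apply: le_trans (ler_normD _ _) _; rewrite normrM (gtr0_norm Lz0) lerD2l.
  have [h1 h2] := hr i; rewrite ger0_norm //; exact: ltW.
have h1 : (norm1 x <= norm1 q * L + d * L)%N.
  rewrite /norm1; apply: (@leq_trans (\sum_(i < d) (`|q i|%N * L + L))%N); first by apply: leq_sum => i _; apply: hx.
  by rewrite big_split /= -big_distrl /= sum_nat_const card_ord.
apply: leq_trans h1 _.
rewrite mulnDr (mulnC L d) (mulnC L (_ ^ _)%N) (addnC (d * L)) leq_add2r.
exact: leq_mul (leq_trans hqn (arithG d s)) (leqnn L).
Qed.
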